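(* If $\Phi=(\varphi_n)_{n\in\mathbb{N}}$ is a depth-bounded fuzzy simulation between fuzzy automata $\mathcal{A}$ and $\mathcal{A}'$, then for every $n\in\mathbb{N}$ and every $\alpha\in\mathcal{F}^{n}_{\to}$ we have $\varphi_n^{-1}\circ\alpha^{\mathcal{A}}\le\alpha^{\mathcal{A}'}$; in particular $\varphi_n(x,x')\le\bigwedge_{\alpha\in\mathcal{F}^n_{\to}}(\alpha^{\mathcal{A}}(x)\Rightarrow\alpha^{\mathcal{A}'}(x'))$ for all $(x,x')\in A\times A'$.
   Context: $\mathcal{L}=\langle L,\le,\otimes,\Rightarrow,0,1\rangle$ is a complete residuated lattice: $\langle L,\le,0,1\rangle$ is a complete lattice with least element $0$ and greatest element $1$, $\langle L,\otimes,1\rangle$ is a commutative monoid, and $x\otimes y\le z$ iff $x\le (y\Rightarrow z)$. Fuzzy sets/relations are maps into $L$ ordered pointwise; $\varphi^{-1}(b,a)=\varphi(a,b)$; $(\varphi\circ\psi)(a,c)=\bigvee_b\varphi(a,b)\otimes\psi(b,c)$, $(\varphi\circ g)(a)=\bigvee_b\varphi(a,b)\otimes g(b)$. A fuzzy automaton over $\Sigma$ is $\mathcal{A}=\langle A,\delta^{\mathcal{A}},\sigma^{\mathcal{A}},\tau^{\mathcal{A}}\rangle$ with $A$ nonempty, $\delta^{\mathcal{A}}:A\times\Sigma\times A\to L$, $\sigma^{\mathcal{A}},\tau^{\mathcal{A}}:A\to L$; $\delta^{\mathcal{A}}_s(x,y)=\delta^{\mathcal{A}}(x,s,y)$; similarly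 $\mathcal{A}'$ with states $A'$. The sets $\mathcal{F}^n_{\to}$ ($n\in\mathbb{N}$) are the smallest sets of formulas such that: $\tau\in\mathcal{F}^n_{\to}$; if $s\in\Sigma$ and $\alpha\in\mathcal{F}^n_{\to}$ then $(s\circ\alpha)\in\mathcal{F}^{n+1}_{\to}$; if $a\in L$ and $\alpha\in\mathcal{F}^n_{\to}$ then $(a\to\alpha)\in\mathcal{F}^n_{\to}$; if $\alpha,\beta\in\mathcal{F}^n_{\to}$ then $(\alpha\wedge\beta)\in\mathcal{F}^n_{\to}$. Semantics in $\mathcal{A}$ (a fuzzy set $\alpha^{\mathcal{A}}$ on $A$): $\tau^{\mathcal{A}}$ is the terminal fuzzy set; $(s\circ\alpha)^{\mathcal{A}}=\delta^{\mathcal{A}}_s\circ\alpha^{\mathcal{A}}$; $(a\to\alpha)^{\mathcal{A}}(x)=a\Rightarrow\alpha^{\mathcal{A}}(x)$; $(\alpha\wedge\beta)^{\mathcal{A}}(x)=\alpha^{\mathcal{A}}(x)\wedge\beta^{\mathcal{A}}(x)$. A depth-bounded fuzzy simulation between $\mathcal{A}$ and $\mathcal{A}'$ is a sequence $(\varphi_n)_{n\in\mathbb{N}}$ of fuzzy relations $A\times A'\to L$ with $\varphi_n\le\varphi_{n-1}$ ($n\ge1$), $\varphi_0^{-1}\circ\tau^{\mathcal{A}}\le\tau^{\mathcal{A}'}$, and $\varphi_n^{-1}\circ\delta^{\mathcal{A}}_s\le\delta^{\mathcal{A}'}_s\circ\varphi_{n-1}^{-1}$ for all $s\in\Sigma$,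 $n\ge1$. *)

(* Defs.v *)
Set Implicit Arguments.

Record CRL : Type := {
  carrier :> Type;
  le : carrier -> carrier -> Prop;
  bot : carrier;
  top : carrier;
  sup : (carrier -> Prop) -> carrier;
  inf : (carrier -> Prop) -> carrier;
  mul : carrier -> carrier -> carrier;
  res : carrier -> carrier -> carrier;
  le_refl : forall x, le x x;
  le_trans : forall x y z, le x y -> le y z -> le x z;
  le_antisym : forall x y, le x y -> le y x -> x = y;
  bot_le : forall x, le bot x;
  le_top : forall x, le x top;
  sup_ub : forall (S : carrier -> Prop) x, S x -> le x (sup S);
  sup_least : forall (S : carrier -> Prop) y, (forall x, S x -> le x y) -> le (sup S) y;
  inf_lb : forall (S : carrier -> Prop) x, S x -> le (inf S) x;
  inf_greatest : forall (S : carrier -> Prop) y, (forall x, S x -> le y x) -> le y (inf S);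
  mulA : forall x y z, mul x (mul y z) = mul (mul x y) z;
  mulC : forall x y, mul x y = mul y x;
  mul1x : forall x, mul top x = x;
  residuation : forall x y z, le (mul x y) z <-> le x (res y z)
}.

Arguments le {L} : rename.
Arguments sup {L} : rename.
Arguments inf {L} : rename.
Arguments mul {L} : rename.
Arguments res {L} : rename.


Section Fuzzy.
Variable L : CRL.

Definition meet (x y : L) : L := inf (fun z => z = x \/ z = y).

Definition fset_le {A : Type} (f g : A -> L) : Prop := forall a, le (f a) (g a).

Definition finv {A B : Type} (phi : A -> B -> L) : B -> A -> L := fun b a => phi a b.

Definition rcomp {A B C : Type} (phi : A -> B -> L) (psi : B -> C -> L) : A -> C -> L :=
  fun a c => sup (fun v => exists b, v = mul (phi a b) (psi b c)).

Definition rsetcomp {A B : Type} (phi : A -> B -> L) (g : B -> L) : A -> L :=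
  fun a => sup (fun v => exists b, v = mul (phi a b) (g b)).

Record fautomaton (Sigma : Type) : Type := {
  st : Type;
  st_inhabited : inhabited st;
  delta : st -> Sigma -> st -> L;
  sigma0 : st -> L;
  tau0 : st -> L
}.

Definition delta_s {Sigma : Type} (M : fautomaton Sigma) (s : Sigma) : st M -> st M -> L :=
  fun x y => delta M x s y.

Inductive Fto (Sigma : Type) : nat -> Type :=
  | Ftau : forall n, Fto Sigma n
  | Fdia : forall n, Sigma -> Fto Sigma n -> Fto Sigma (S n)
  | Fimp : forall n, L -> Fto Sigma n -> Fto Sigma n
  | Fand : forall n, Fto Sigma n -> Fto Sigma n -> Fto Sigma n.

Fixpoint sem {Sigma : Type} (M : fautomaton Sigma) {n : nat} (f : Fto Sigma n)
  : st M -> L :=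
  match f with
  | Ftau _ _ => tau0 M
  | Fdia s g => rsetcomp (delta_s M s) (sem M g)
  | Fimp a g => fun x => res a (sem M g x)
  | Fand g h => fun x => meet (sem M g x) (sem M h x)
  end.

Definition db_simulation {Sigma : Type} (M M' : fautomaton Sigma)
  (phi : nat -> st M -> st M' -> L) : Prop :=
  (forall n, 1 <= n -> forall x x', le (phi n x x') (phi (n - 1) x x')) /\
  fset_le (rsetcomp (finv (phi 0)) (tau0 M)) (tau0 M') /\
  (forall (s : Sigma) n, 1 <= n ->
     forall x' y, le (rcomp (finv (phi n)) (delta_s M s) x' y)
                     (rcomp (delta_s M' s) (finv (phi (n - 1))) x' y)).

End Fuzzy.
Arguments db_simulation {L Sigma} M M' phi.
Arguments meet {L}.
Arguments fset_le {L A}.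
Arguments finv {L A B}.
Arguments rcomp {L A B C}.
Arguments rsetcomp {L A B}.
Arguments sem {L Sigma} M {n}.
Arguments delta_s {L Sigma} M s.

(* Main.v *)
Require Import Defs.
From Stdlib Require Import Lia.

Section H.
Variable L : CRL.

Lemma mul_monol (a b c : L) : le a b -> le (mul a c) (mul b c).
Proof.
  intro H. apply residuation. eapply le_trans; [exact H|].
  apply residuation. apply le_refl.
Qed.

Lemma mul_monor (a b c : L) : le a b -> le (mul c a) (mul c b).
Proof. intro H. rewrite (mulC L c a), (mulC L c b). now apply mul_monol. Qed.

Lemma sup_mul_l (S : L -> Prop) (b T : L) :
  (forall v, S v -> le (mul v b) T) -> le (mul (sup S) b) T.
Proof.
  intro H. apply residuation. apply sup_least. intros v Hv. apply residuation. auto.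
Qed.

Lemma sup_mul_r (S : L -> Prop) (b T : L) :
  (forall v, S v -> le (mul b v) T) -> le (mul b (sup S)) T.
Proof.
  intro H. rewrite mulC. apply sup_mul_l. intros v Hv. rewrite mulC. auto.
Qed.
End H.
Arguments mul_monol {L}.
Arguments mul_monor {L}.
Arguments sup_mul_l {L}.
Arguments sup_mul_r {L}.

Theorem mainTheorem8 (L : CRL) (Sigma : Type) (M M' : fautomaton L Sigma)
  (phi : nat -> st M -> st M' -> L) :
  db_simulation M M' phi ->
  (forall (n : nat) (alpha : Fto L Sigma n),
     fset_le (rsetcomp (finv (phi n)) (sem M alpha)) (sem M' alpha)) /\
  (forall (n : nat) (x : st M) (x' : st M'),
     le (phi n x x')
        (inf (fun v => exists alpha : Fto L Sigma n,
                 v = res (sem M alpha x) (sem M' alpha x')))).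
Proof.
  intros [Hmon [Htau Hdel]].
  assert (H0 : forall n x x', le (phi n x x') (phi 0 x x')).
  { induction n; intros x x'. apply le_refl.
    eapply le_trans; [apply Hmon; lia|]. replace (S n - 1) with n by lia. apply IHn. }
  assert (P : forall n (alpha : Fto L Sigma n) x x',
             le (mul (phi n x x') (sem M alpha x)) (sem M' alpha x')).
  { intros n alpha. induction alpha; intros x x'; simpl.
    - eapply le_trans; [apply mul_monol, H0|].
      eapply le_trans; [|apply Htau]. unfold rsetcomp, finv.
      apply sup_ub. exists x. reflexivity.
    - unfold rsetcomp at 1. apply sup_mul_r. intros v [y ->].
      rewrite mulA.
      eapply le_trans.
      { apply mul_monol.
        eapply le_trans; [|apply (Hdel s (S n) ltac:(lia) x' y)].
        unfold rcomp, finv. apply sup_ub. exists x. reflexivity. }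
      replace (S n - 1) with n by lia.
      unfold rcomp, finv. apply sup_mul_l. intros w [y' ->].
      rewrite <- (mulA L).
      eapply le_trans; [apply mul_monor, IHalpha|].
      unfold rsetcomp. apply sup_ub. exists y'. reflexivity.
    - apply (proj1 (residuation _ _ _ _)). rewrite <- (mulA L). eapply le_trans; [|apply (IHalpha x x')].
      apply mul_monor. apply residuation. apply le_refl.
    - unfold meet. apply inf_greatest. intros z [-> | ->].
      + eapply le_trans; [|apply IHalpha1]. apply mul_monor. apply inf_lb. auto.
      + eapply le_trans; [|apply IHalpha2]. apply mul_monor. apply inf_lb. auto. }
  split.
  - intros n alpha x'. unfold rsetcomp, finv. apply sup_least.
    intros v [x ->]. apply P.
  - intros n x x'. apply inf_greatest. intros v [alpha ->].
    apply residuation. apply P.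
Qed.
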